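(* Let $k\ge1$ be odd, $\omega=\frac{1+\sqrt{-7}}{2}$, and with $S=\begin{psmallmatrix}0&-1\\1&0\end{psmallmatrix}$, $T=\begin{psmallmatrix}1&1\\0&1\end{psmallmatrix}$, $T_\omega=\begin{psmallmatrix}1&\omega\\0&1\end{psmallmatrix}$, $U=TS$, let $W_{k,k}=\ker(\mathbf{1}+S)\cap\ker(\mathbf{1}+U+U^2)\cap\ker(T+ST_\omega+T_\omega ST+ST_\omega^{-1}ST_\omega)$. Let $\varepsilon=\begin{psmallmatrix}-1&0\\0&1\end{psmallmatrix}$, so $P|\varepsilon=P(-z,-\bar z)$. Then $W_{k,k}|\varepsilon=W_{k,k}$, and hence $W_{k,k}=W_{k,k}^1\oplus W_{k,k}^{-1}$, where $W_{k,k}^{\pm1}=W_{k,k}\cap\{P\in V_{k,k}:P(-z,-\bar z)=\pm P(z,\bar z)\}$.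
   Context: $V_{k,k}$: polynomials $\sum_{0\le i,j\le k}c_{ij}z^i\bar z^j$ over $\mathbb{C}$ with right action $(P|\gamma)(z,\bar z)=(cz+e)^k\overline{(cz+e)}^kP\!\left(\frac{az+b}{cz+e},\frac{\bar a\bar z+\bar b}{\bar c\bar z+\bar e}\right)$ for $\gamma=\begin{psmallmatrix}a&b\\c&e\end{psmallmatrix}$, extended linearly; $\ker(X)=\{P:P|X=0\}$; $W|\varepsilon=\{P|\varepsilon:P\in W\}$. *)

(* Defs.v *)
(* Complex numbers are modelled by algC (algebraic complex numbers),
   which contain all the constants involved (omega = (1 + sqrt(-7))/2). *)
From HB Require Import structures.
From mathcomp Require Import all_boot all_order all_algebra.
From mathcomp Require Import algC.
Set Implicit Arguments. Unset Strict Implicit. Unset Printing Implicit Defensive.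
Import Order.TTheory GRing.Theory Num.Theory.
Local Open Scope ring_scope.

(* Bivariate polynomials in z and zbar: outer variable is z, inner variable is w = zbar.
   The monomial z^i zbar^j is ('X^j)%:P * 'X^i, with coefficient (P`_i)`_j. *)
Notation bipoly := {poly {poly algC}}.

Definition inV (k : nat) (P : bipoly) : Prop :=
  leq (size P) k.+1 /\ forall i, leq (size P`_i) k.+1.

Definition linZ (a b : algC) : bipoly := a%:P%:P * 'X + b%:P%:P.
Definition linW (a b : algC) : bipoly := (a *: 'X + b%:P)%:P.

(* The right action of gamma = [[a,b],[c,e]] on V_{k,k}:
   (P|gamma)(z,zbar) = (cz+e)^k (conj(c) zbar + conj(e))^k P((az+b)/(cz+e), conj(...)),
   which for P = sum c_ij z^i zbar^j is, as a polynomial identity,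
   sum c_ij (az+b)^i (cz+e)^(k-i) (conj a zbar + conj b)^j (conj c zbar + conj e)^(k-j). *)
Definition slash (k : nat) (g : 'M[algC]_2) (P : bipoly) : bipoly :=
  let a := g ord0 ord0 in let b := g ord0 ord_max in
  let c := g ord_max ord0 in let e := g ord_max ord_max in
  \sum_(i < k.+1) \sum_(j < k.+1)
     ((P`_i)`_j)%:P%:P *
       (linZ a b ^+ i * linZ c e ^+ (k - i) *
        linW (a^*) (b^*) ^+ j * linW (c^*) (e^*) ^+ (k - j)).

(* linear extension: X = sum of the matrices in gs (group-ring element) *)
Definition slashX (k : nat) (gs : seq 'M[algC]_2) (P : bipoly) : bipoly :=
  \sum_(g <- gs) slash k g P.

Definition inker (k : nat) (gs : seq 'M[algC]_2) (P : bipoly) : Prop :=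
  inV k P /\ slashX k gs P = 0.

Definition mx2 (a b c e : algC) : 'M[algC]_2 :=
  \matrix_(i < 2, j < 2)
    if i == ord0 then (if j == ord0 then a else b) else (if j == ord0 then c else e).

Definition omega : algC := (1 + sqrtC (-7)) / 2.
Definition Sm : 'M[algC]_2 := mx2 0 (-1) 1 0.
Definition Tm : 'M[algC]_2 := mx2 1 1 0 1.
Definition Tw : 'M[algC]_2 := mx2 1 omega 0 1.
Definition Twinv : 'M[algC]_2 := mx2 1 (- omega) 0 1.
Definition Um : 'M[algC]_2 := Tm *m Sm.
Definition Id2 : 'M[algC]_2 := 1%:M.
Definition epsm : 'M[algC]_2 := mx2 (-1) 0 0 1.

Definition Wkk (k : nat) (P : bipoly) : Prop :=
  inker k [:: Id2; Sm] P /\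
  inker k [:: Id2; Um; Um *m Um] P /\
  inker k [:: Tm; Sm *m Tw; Tw *m Sm *m Tm; Sm *m Twinv *m Sm *m Tw] P.

(* P(-z, -zbar) *)
Definition negzw (P : bipoly) : bipoly := (map_poly (comp_poly (- 'X)) P) \Po (- 'X).

Definition Wkk_sign (k : nat) (s : algC) (P : bipoly) : Prop :=
  Wkk k P /\ negzw P = s%:P%:P * P.

(* Main.v *)
Require Import Defs.
From HB Require Import structures.
From mathcomp Require Import all_boot all_order all_algebra.
From mathcomp Require Import algC.
From mathcomp Require Import ring zify.
Set Implicit Arguments. Unset Strict Implicit. Unset Printing Implicit Defensive.
Import Order.TTheory GRing.Theory Num.Theory.
Local Open Scope ring_scope.

Definition Vv (m n : nat) (P : bipoly) : Prop :=
  (forall i, (m < i)%N -> P`_i = 0) /\ (forall i j, (n < j)%N -> P`_i`_j = 0).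

Definition mono (i j : nat) : bipoly := ('X^j)%:P * 'X^i.

Definition HomB (m n : nat) (h1 h2 h3 h4 : bipoly) (P : bipoly) : bipoly :=
  \sum_(i < m.+1) \sum_(j < n.+1)
     ((P`_i)`_j)%:P%:P * (h1 ^+ i * h2 ^+ (m - i) * h3 ^+ j * h4 ^+ (n - j)).

Lemma sum_delta (V : nmodType) n a (F : nat -> V) :
  \sum_(i < n) (if (i == a :> nat) then F i else 0) = if (a < n)%N then F a else 0.
Proof.
elim: n => [|n IH]; first by rewrite big_ord0.
rewrite big_ord_recr /= IH ltnS.
by case: (ltngtP a n) => h; rewrite ?addr0 ?add0r // h.
Qed.

Lemma coef_cmono c i j a b :
  ((c%:P%:P * mono i j)`_a)`_b = if (a == i) && (b == j) then c else 0.
Proof.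
rewrite /mono mulrA -polyCM coefMXn.
case: (ltngtP a i) => h.
- by rewrite coef0.
- rewrite coefC; have -> : (a - i == 0)%N = false by lia.
  by rewrite coef0.
- by rewrite h subnn coefC /= coefCM coefXn; case: (b == j); rewrite ?mulr1 ?mulr0.
Qed.

Lemma Vv_expand m n P : Vv m n P ->
  P = \sum_(i < m.+1) \sum_(j < n.+1) (P`_i`_j)%:P%:P * mono i j.
Proof.
move=> [H1 H2]; apply/polyP => a; apply/polyP => b.
rewrite !coef_sum.
rewrite (eq_bigr (fun i : 'I_m.+1 => if (i == a :> nat) then P`_a`_b else 0)).
  rewrite (sum_delta _ _ (fun _ => P`_a`_b)); case: ifP => // /negbT; rewrite -leqNgt => h.
  by rewrite H1 ?coef0.
move=> i _; rewrite !coef_sum.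
rewrite (eq_bigr (fun j : 'I_n.+1 => if (i == a :> nat) then (if (j == b :> nat) then P`_a`_b else 0) else 0)).
  case: (eqVneq (i : nat) a) => [ia|_]; last by rewrite big1.
  rewrite (sum_delta _ _ (fun _ => P`_a`_b)); case: ifP => // /negbT; rewrite -leqNgt => h.
  by rewrite H2.
move=> j _; rewrite coef_cmono.
by rewrite (eq_sym a) (eq_sym b); case: (eqVneq (i:nat) a) => [<-|] //=; case: (eqVneq (j:nat) b) => [<-|].
Qed.

Section HomLemmas.
Variables (h1 h2 h3 h4 : bipoly).

Lemma HomB_D m n P Q : HomB m n h1 h2 h3 h4 (P + Q) = HomB m n h1 h2 h3 h4 P + HomB m n h1 h2 h3 h4 Q.
Proof.
rewrite /HomB -big_split; apply: eq_bigr => i _; rewrite -big_split; apply: eq_bigr => j _.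
by rewrite !coefD !rmorphD mulrDl.
Qed.

Lemma HomB_0 m n : HomB m n h1 h2 h3 h4 0 = 0.
Proof. by rewrite /HomB big1 // => i _; rewrite big1 // => j _; rewrite !coef0 !rmorph0 mul0r. Qed.

Lemma HomB_sum m n I (r : seq I) (F : I -> bipoly) :
  HomB m n h1 h2 h3 h4 (\sum_(x <- r) F x) = \sum_(x <- r) HomB m n h1 h2 h3 h4 (F x).
Proof. exact: (big_morph _ (@HomB_D m n) (HomB_0 m n)). Qed.

Lemma HomB_C m n c P : HomB m n h1 h2 h3 h4 (c%:P%:P * P) = c%:P%:P * HomB m n h1 h2 h3 h4 P.
Proof.
rewrite /HomB mulr_sumr; apply: eq_bigr => i _; rewrite mulr_sumr; apply: eq_bigr => j _.
by rewrite !coefCM !rmorphM mulrA.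
Qed.

Definition Hm m n i j := h1 ^+ i * h2 ^+ (m - i) * h3 ^+ j * h4 ^+ (n - j).

Lemma HomB_mono m n c a b : (a <= m)%N -> (b <= n)%N ->
  HomB m n h1 h2 h3 h4 (c%:P%:P * mono a b) = c%:P%:P * Hm m n a b.
Proof.
move=> ha hb; rewrite /HomB.
rewrite (eq_bigr (fun i : 'I_m.+1 => if (i == a :> nat) then c%:P%:P * Hm m n a b else 0)).
  by rewrite (sum_delta _ _ (fun _ => c%:P%:P * Hm m n a b)) ltnS ha.
move=> i _.
rewrite (eq_bigr (fun j : 'I_n.+1 => if (i == a :> nat) then (if (j == b :> nat) then c%:P%:P * Hm m n a b else 0) else 0)).
  case: (eqVneq (i : nat) a) => [ia|_]; last by rewrite big1.
  by rewrite (sum_delta _ _ (fun _ => c%:P%:P * Hm m n a b)) ltnS hb.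
move=> j _; rewrite coef_cmono.
case: (eqVneq (i:nat) a) => [<-|] /=; last by rewrite !rmorph0 mul0r.
by case: (eqVneq (j:nat) b) => [<-|] /=; rewrite ?rmorph0 ?mul0r.
Qed.

End HomLemmas.

Lemma Vv_D m n P Q : Vv m n P -> Vv m n Q -> Vv m n (P + Q).
Proof.
move=> [P1 P2] [Q1 Q2]; split=> [i hi|i j hj]; first by rewrite coefD P1 ?Q1 ?addr0.
by rewrite !coefD P2 ?Q2 ?addr0.
Qed.

Lemma Vv_0 m n : Vv m n 0.
Proof. by split=> *; rewrite !coef0. Qed.

Lemma Vv_N m n P : Vv m n P -> Vv m n (- P).
Proof. by move=> [P1 P2]; split=> [i hi|i j hj]; rewrite !coefN; [rewrite P1 // oppr0 | rewrite P2 // oppr0]. Qed.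

Lemma Vv_sum m n I (r : seq I) (F : I -> bipoly) :
  (forall x, Vv m n (F x)) -> Vv m n (\sum_(x <- r) F x).
Proof.
move=> H; elim: r => [|x r IH]; first by rewrite big_nil; apply: Vv_0.
by rewrite big_cons; apply: Vv_D.
Qed.

Lemma Vv_C m n c P : Vv m n P -> Vv m n (c%:P%:P * P).
Proof.
by move=> [P1 P2]; split=> [i hi|i j hj]; rewrite !coefCM; [rewrite P1 // mulr0 | rewrite P2 // mulr0].
Qed.

Lemma Vv_weak m n m' n' P : Vv m n P -> (m <= m')%N -> (n <= n')%N -> Vv m' n' P.
Proof.
move=> [P1 P2] hm hn; split=> [i hi|i j hj]; [apply: P1 | apply: P2]; lia.
Qed.

Lemma Vv_mul m n m' n' P Q : Vv m n P -> Vv m' n' Q -> Vv (m + m') (n + n') (P * Q).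
Proof.
move=> [P1 P2] [Q1 Q2]; split=> [i hi|i j hj].
  rewrite coefM big1 // => r _.
  case: (leqP (r : nat) m) => hr; last by rewrite P1 // mul0r.
  by rewrite Q1 ?mulr0 //; have := ltn_ord r; lia.
rewrite coefM coef_sum big1 // => r _.
rewrite coefM big1 // => s _.
case: (leqP (s : nat) n) => hs; last by rewrite P2 // mul0r.
by rewrite Q2 ?mulr0 //; have := ltn_ord s; lia.
Qed.

Lemma Vv_1 : Vv 0 0 1.
Proof.
split=> [i hi|i j hj]; first by rewrite coef1; case: i hi.
by rewrite coef1; case: (i == 0)%N; rewrite ?coef1 ?coef0 //; case: j hj.
Qed.

Lemma Vv_exp a b p L : Vv a b L -> Vv (p * a) (p * b) (L ^+ p).
Proof.
move=> HL; elim: p => [|p IH]; first by rewrite expr0; apply: Vv_1.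
by rewrite exprS !mulSn; apply: Vv_mul.
Qed.

Lemma Vv_mono i j : Vv i j (mono i j).
Proof.
split=> [a ha|a b hb].
  apply/polyP => b; rewrite -[mono i j]mul1r -[1 : bipoly](rmorph1 (polyC \o polyC)) /=.
  by rewrite coef_cmono coef0; have -> : (a == i) = false by lia.
rewrite -[mono i j]mul1r -[1 : bipoly](rmorph1 (polyC \o polyC)) /=.
by rewrite coef_cmono (_ : (b == j) = false) ?andbF //; lia.
Qed.

Lemma Vv_linZ a b : Vv 1 0 (linZ a b).
Proof.
split=> [i hi|i j hj]; rewrite /linZ coefD coefCM coefX coefC.
  by case: i hi => [|[|i]] //= _; rewrite mulr0 addr0.
case: i => [|[|i]] /=; rewrite ?mulr0 ?mulr1 ?add0r ?addr0 ?coefC ?coef0 //; by case: j hj.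
Qed.

Lemma Vv_linW a b : Vv 0 1 (linW a b).
Proof.
split=> [i hi|i j hj]; rewrite /linW coefC.
  by case: i hi.
case: i => [|i] /=; last by rewrite coef0.
by rewrite coefD coefZ coefX coefC; case: j hj => [|[|j]] // _ /=; rewrite mulr0 addr0.
Qed.

Lemma inV_Vv k P : inV k P <-> Vv k k P.
Proof.
split.
  move=> [h1 h2]; split=> [i hi|i j hj]; first by apply: (leq_sizeP _ _ h1).
  by apply: (leq_sizeP _ _ (h2 i)).
move=> [h1 h2]; split; first by apply/leq_sizeP.
by move=> i; apply/leq_sizeP => j hj; apply: h2.
Qed.

Lemma mono_mul a b i j i' j' :
  (a%:P%:P * mono i j) * (b%:P%:P * mono i' j') = (a * b)%:P%:P * mono (i + i') (j + j').
Proof. rewrite /mono !polyCM !exprD !polyCM; ring. Qed.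

Lemma Hm_mul h1 h2 h3 h4 m n m' n' i j i' j' :
  (i <= m)%N -> (j <= n)%N -> (i' <= m')%N -> (j' <= n')%N ->
  Hm h1 h2 h3 h4 (m + m') (n + n') (i + i') (j + j') =
  Hm h1 h2 h3 h4 m n i j * Hm h1 h2 h3 h4 m' n' i' j'.
Proof.
move=> hi hj hi' hj'; rewrite /Hm.
have -> : (m + m' - (i + i') = (m - i) + (m' - i'))%N by lia.
have -> : (n + n' - (j + j') = (n - j) + (n' - j'))%N by lia.
rewrite !exprD; ring.
Qed.

Lemma HomBE h1 h2 h3 h4 m n P : HomB m n h1 h2 h3 h4 P =
  \sum_(i < m.+1) \sum_(j < n.+1) (P`_i`_j)%:P%:P * Hm h1 h2 h3 h4 m n i j.
Proof. by []. Qed.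

Lemma HomB_mul h1 h2 h3 h4 m n m' n' P Q : Vv m n P -> Vv m' n' Q ->
  HomB (m + m') (n + n') h1 h2 h3 h4 (P * Q) =
  HomB m n h1 h2 h3 h4 P * HomB m' n' h1 h2 h3 h4 Q.
Proof.
move=> HP HQ.
have -> : P * Q = \sum_(i < m.+1) \sum_(j < n.+1) \sum_(i' < m'.+1) \sum_(j' < n'.+1)
    (P`_i`_j * Q`_i'`_j')%:P%:P * mono (i + i') (j + j').
  rewrite {1}(Vv_expand HP) {1}(Vv_expand HQ) mulr_suml; apply: eq_bigr => i _.
  rewrite mulr_suml; apply: eq_bigr => j _.
  rewrite mulr_sumr; apply: eq_bigr => i' _.
  rewrite mulr_sumr; apply: eq_bigr => j' _.
  by rewrite mono_mul.
rewrite (HomBE h1 h2 h3 h4 m n P) (HomBE h1 h2 h3 h4 m' n' Q).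
rewrite mulr_suml HomB_sum; apply: eq_bigr => i _.
rewrite mulr_suml HomB_sum; apply: eq_bigr => j _.
rewrite mulr_sumr HomB_sum; apply: eq_bigr => i' _.
rewrite mulr_sumr HomB_sum; apply: eq_bigr => j' _.
have oi : (i <= m)%N := ltn_ord i. have oj : (j <= n)%N := ltn_ord j.
have oi' : (i' <= m')%N := ltn_ord i'. have oj' : (j' <= n')%N := ltn_ord j'.
rewrite (HomB_mono _ _ _ _ _ (leq_add oi oi') (leq_add oj oj')).
rewrite (Hm_mul h1 h2 h3 h4 oi oj oi' oj').
by rewrite !polyCM mulrACA.
Qed.

Lemma HomB_1 h1 h2 h3 h4 : HomB 0 0 h1 h2 h3 h4 1 = 1.
Proof.
rewrite /HomB !big_ord_recl !big_ord0 /= !addr0 !coef1 /= !expr0 !mulr1.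
by rewrite !rmorph1.
Qed.

Lemma HomB_exp h1 h2 h3 h4 a b p L : Vv a b L ->
  HomB (p * a) (p * b) h1 h2 h3 h4 (L ^+ p) = (HomB a b h1 h2 h3 h4 L) ^+ p.
Proof.
move=> HL; elim: p => [|p IH]; first by rewrite !expr0 !mul0n HomB_1.
by rewrite !exprS !mulSn HomB_mul ?IH //; apply: Vv_exp.
Qed.

Lemma HomB_linZ h1 h2 h3 h4 a b :
  HomB 1 0 h1 h2 h3 h4 (linZ a b) = a%:P%:P * h1 + b%:P%:P * h2.
Proof.
rewrite /HomB !big_ord_recl !big_ord0 /= /linZ !coefD !coefCM !coefX !coefC /=.
rewrite /bump /= !mulr0 !add0r !mulr1 !addr0 !expr0 !expr1 !mul1r ?mulr1.
by rewrite addrC.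
Qed.

Lemma HomB_linW h1 h2 h3 h4 a b :
  HomB 0 1 h1 h2 h3 h4 (linW a b) = a%:P%:P * h3 + b%:P%:P * h4.
Proof.
rewrite /HomB !big_ord_recl !big_ord0 /= /linW !coefC /=.
rewrite !coefD !coefZ !coefX !coefC /=.
rewrite /bump /= ?mulr0 ?add0r ?mulr1 ?addr0 ?expr0 ?expr1 ?mul1r ?mulr1.
by rewrite addrC.
Qed.

Lemma HomB_mul' h1 h2 h3 h4 m n m' n' M N P Q : Vv m n P -> Vv m' n' Q ->
  M = (m + m')%N -> N = (n + n')%N ->
  HomB M N h1 h2 h3 h4 (P * Q) =
  HomB m n h1 h2 h3 h4 P * HomB m' n' h1 h2 h3 h4 Q.
Proof. by move=> HP HQ -> ->; apply: HomB_mul. Qed.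

Lemma Vv_mul' m n m' n' M N P Q : Vv m n P -> Vv m' n' Q ->
  M = (m + m')%N -> N = (n + n')%N -> Vv M N (P * Q).
Proof. by move=> HP HQ -> ->; apply: Vv_mul. Qed.

Lemma Vv_expZ p a b : Vv p 0 (linZ a b ^+ p).
Proof. by have := Vv_exp p (Vv_linZ a b); rewrite muln1 muln0. Qed.

Lemma Vv_expW p a b : Vv 0 p (linW a b ^+ p).
Proof. by have := Vv_exp p (Vv_linW a b); rewrite muln1 muln0. Qed.

Lemma HomB_expZ h1 h2 h3 h4 p a b :
  HomB p 0 h1 h2 h3 h4 (linZ a b ^+ p) = (a%:P%:P * h1 + b%:P%:P * h2) ^+ p.
Proof. by have := HomB_exp h1 h2 h3 h4 p (Vv_linZ a b); rewrite muln1 muln0 HomB_linZ. Qed.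

Lemma HomB_expW h1 h2 h3 h4 p a b :
  HomB 0 p h1 h2 h3 h4 (linW a b ^+ p) = (a%:P%:P * h3 + b%:P%:P * h4) ^+ p.
Proof. by have := HomB_exp h1 h2 h3 h4 p (Vv_linW a b); rewrite muln1 muln0 HomB_linW. Qed.

Lemma linZ_comb a b a' b' c' e' :
  a%:P%:P * linZ a' b' + b%:P%:P * linZ c' e' = linZ (a * a' + b * c') (a * b' + b * e').
Proof. rewrite /linZ !rmorphD /= !rmorphM /=; ring. Qed.

Lemma linW_comb a b a' b' c' e' :
  a%:P%:P * linW a' b' + b%:P%:P * linW c' e' = linW (a * a' + b * c') (a * b' + b * e').
Proof.
rewrite /linW -!rmorphM -rmorphD; congr (_%:P).
rewrite -!mul_polyC !rmorphD !rmorphM /=; ring.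
Qed.

Lemma mulmx2E (g h : 'M[algC]_2) i j :
  (g *m h) i j = g i ord0 * h ord0 j + g i ord_max * h ord_max j.
Proof.
rewrite mxE !big_ord_recl big_ord0 addr0; congr (_ + _ * _).
- by congr (g i _); apply: val_inj.
- by congr (h _ j); apply: val_inj.
Qed.

Definition LZ1 (g : 'M[algC]_2) := linZ (g ord0 ord0) (g ord0 ord_max).
Definition LZ2 (g : 'M[algC]_2) := linZ (g ord_max ord0) (g ord_max ord_max).
Definition LW1 (g : 'M[algC]_2) := linW (g ord0 ord0)^* (g ord0 ord_max)^*.
Definition LW2 (g : 'M[algC]_2) := linW (g ord_max ord0)^* (g ord_max ord_max)^*.

Lemma slashE k g P : slash k g P = HomB k k (LZ1 g) (LZ2 g) (LW1 g) (LW2 g) P.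
Proof. by []. Qed.

Lemma HomB_B k g h i j : (i <= k)%N -> (j <= k)%N ->
  HomB k k (LZ1 h) (LZ2 h) (LW1 h) (LW2 h) (Hm (LZ1 g) (LZ2 g) (LW1 g) (LW2 g) k k i j) =
  Hm (LZ1 (g *m h)) (LZ2 (g *m h)) (LW1 (g *m h)) (LW2 (g *m h)) k k i j.
Proof.
move=> hi hj; rewrite /Hm.
have VA := Vv_expZ i (g ord0 ord0) (g ord0 ord_max).
have VB := Vv_expZ (k - i) (g ord_max ord0) (g ord_max ord_max).
have VC := Vv_expW j (g ord0 ord0)^* (g ord0 ord_max)^*.
have VD := Vv_expW (k - j) (g ord_max ord0)^* (g ord_max ord_max)^*.
have VAB := Vv_mul' (M := k) (N := 0) VA VB (esym (subnKC hi)) erefl.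
have VABC := Vv_mul' (M := k) (N := j) VAB VC (esym (addn0 k)) erefl.
rewrite (@HomB_mul' _ _ _ _ _ _ _ _ _ _ _ _ VABC VD (esym (addn0 k)) (esym (subnKC hj))).
rewrite (@HomB_mul' _ _ _ _ _ _ _ _ _ _ _ _ VAB VC (esym (addn0 k)) erefl).
rewrite (@HomB_mul' _ _ _ _ _ _ _ _ _ _ _ _ VA VB (esym (subnKC hi)) erefl).
rewrite !HomB_expZ !HomB_expW /LZ1 /LZ2 /LW1 /LW2 !linZ_comb !linW_comb !mulmx2E.
by rewrite !rmorphD !rmorphM.
Qed.

Lemma slash_comp k g h P : slash k h (slash k g P) = slash k (g *m h) P.
Proof.
rewrite (slashE k (g *m h)) HomBE (slashE k g) HomBE (slashE k h) HomB_sum.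
apply: eq_bigr => i _; rewrite HomB_sum; apply: eq_bigr => j _.
by rewrite HomB_C HomB_B // -ltnS.
Qed.

Lemma slashD k g P Q : slash k g (P + Q) = slash k g P + slash k g Q.
Proof. by rewrite !slashE HomB_D. Qed.

Lemma slash0 k g : slash k g 0 = 0.
Proof. by rewrite !slashE HomB_0. Qed.

Lemma slashC k g c P : slash k g (c%:P%:P * P) = c%:P%:P * slash k g P.
Proof. by rewrite !slashE HomB_C. Qed.

Lemma slashN k g P : slash k g (- P) = - slash k g P.
Proof.
by apply/eqP; rewrite -addr_eq0 -slashD addNr slash0.
Qed.

Lemma slashB k g P Q : slash k g (P - Q) = slash k g P - slash k g Q.
Proof. by rewrite slashD slashN. Qed.

Lemma Vv_Hm k a b c e a' b' c' e' i j : (i <= k)%N -> (j <= k)%N ->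
  Vv k k (Hm (linZ a b) (linZ c e) (linW a' b') (linW c' e') k k i j).
Proof.
move=> hi hj; rewrite /Hm.
have VA := Vv_expZ i a b.
have VB := Vv_expZ (k - i) c e.
have VC := Vv_expW j a' b'.
have VD := Vv_expW (k - j) c' e'.
have VAB := Vv_mul' (M := k) (N := 0) VA VB (esym (subnKC hi)) erefl.
have VABC := Vv_mul' (M := k) (N := j) VAB VC (esym (addn0 k)) erefl.
exact: (Vv_mul' (M := k) (N := k) VABC VD (esym (addn0 k)) (esym (subnKC hj))).
Qed.

Lemma slash_Vv k g P : Vv k k (slash k g P).
Proof.
rewrite slashE HomBE; apply: Vv_sum => i; apply: Vv_sum => j; apply: Vv_C.
by apply: Vv_Hm; rewrite -ltnS.
Qed.

Lemma mx2_mul a b c e a' b' c' e' :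
  mx2 a b c e *m mx2 a' b' c' e' =
  mx2 (a * a' + b * c') (a * b' + b * e') (c * a' + e * c') (c * b' + e * e').
Proof.
apply/matrixP => i j; rewrite mulmx2E !mxE.
by case: i => [[|[|?]] ?] //; case: j => [[|[|?]] ?].
Qed.

Lemma Id2E : Id2 = mx2 1 0 0 1.
Proof.
apply/matrixP => i j; rewrite !mxE.
by case: i => [[|[|?]] ?] //; case: j => [[|[|?]] ?].
Qed.

Lemma slash_mx2 k a b c e P :
  slash k (mx2 a b c e) P = HomB k k (linZ a b) (linZ c e) (linW a^* b^*) (linW c^* e^*) P.
Proof. by rewrite slashE /LZ1 /LZ2 /LW1 /LW2 !mxE. Qed.

Lemma Hm_neg (x1 x2 x3 x4 : bipoly) k i j : (i <= k)%N -> (j <= k)%N ->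
  Hm (- x1) (- x2) (- x3) (- x4) k k i j = Hm x1 x2 x3 x4 k k i j.
Proof.
move=> hi hj; unfold Hm; rewrite (exprNn x1) (exprNn x2) (exprNn x3) (exprNn x4).
have E : ((-1) ^+ i * (-1) ^+ (k - i) * ((-1) ^+ j * (-1) ^+ (k - j)) : bipoly) = 1.
  by rewrite -!exprD !subnKC // addnn -mul2n exprM sqrrN !expr1n.
transitivity (((-1) ^+ i * (-1) ^+ (k - i) * ((-1) ^+ j * (-1) ^+ (k - j))) * (x1 ^+ i * x2 ^+ (k - i) * x3 ^+ j * x4 ^+ (k - j)) : bipoly); first ring.
by rewrite E mul1r.
Qed.

Lemma slash_mx2N k a b c e P :
  slash k (mx2 (- a) (- b) (- c) (- e)) P = slash k (mx2 a b c e) P.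
Proof.
rewrite !slash_mx2 !rmorphN /=.
have NZ x y : linZ (- x) (- y) = - linZ x y by rewrite /linZ !rmorphN /= mulNr opprD.
have NW x y : linW (- x) (- y) = - linW x y by rewrite /linW scaleNr rmorphN /= -opprD rmorphN.
rewrite !NZ !NW !HomBE; apply: eq_bigr => i _; apply: eq_bigr => j _.
by rewrite Hm_neg // -ltnS.
Qed.

Lemma slash_Id k P : Vv k k P -> slash k Id2 P = P.
Proof.
move=> HP; rewrite Id2E slash_mx2 rmorph1 rmorph0 HomBE [RHS](Vv_expand HP).
apply: eq_bigr => i _; apply: eq_bigr => j _; congr (_ * _).
rewrite /Hm /linZ /linW !rmorph1 !rmorph0 scale1r scale0r mul0r ?addr0 ?mul1r ?add0r !expr1n ?mulr1 /mono.
by rewrite rmorphXn mulrC.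
Qed.

Lemma negzw_sl k P : Vv k k P -> negzw P = slash k epsm P.
Proof.
move=> HP; rewrite /epsm slash_mx2 rmorphN1 rmorph0 rmorph1 HomBE.
rewrite {1}(Vv_expand HP) /negzw.
rewrite !rmorph_sum; apply: eq_bigr => i _.
rewrite !rmorph_sum; apply: eq_bigr => j _.
rewrite /mono !rmorphM /= !map_polyC /= !comp_polyC.
rewrite map_polyXn rmorphXn /= comp_polyX.
rewrite /Hm /linZ /linW !rmorphN1 !rmorph0 !rmorph1 /=.
rewrite (rmorphXn (comp_poly _)) /= comp_polyX.
rewrite !mul0r !scale0r !add0r !addr0 mulN1r scaleN1r !expr1n !mulr1.
by congr (_ * _); rewrite mulrC (rmorphXn polyC).
Qed.

Lemma slash_mx2_congr k a b c e a' b' c' e' P : a = a' -> b = b' -> c = c' -> e = e' ->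
  slash k (mx2 a b c e) P = slash k (mx2 a' b' c' e') P.
Proof. by move=> -> -> -> ->. Qed.

Definition hm : 'M[algC]_2 := mx2 1 (-1 - omega) 0 1.

Ltac mxeq := rewrite /epsm /Sm /Tm /Tw /Twinv /Um /hm !mx2_mul;
  first [ apply: slash_mx2_congr; ring
        | rewrite -slash_mx2N; apply: slash_mx2_congr; ring ].

Section MX.
Variables (k : nat) (P : bipoly).
Lemma E11 : slash k (epsm *m Sm) P = slash k (Sm *m epsm) P. Proof. mxeq. Qed.
Lemma E21 : slash k (epsm *m Id2) P = slash k (Sm *m (Id2 *m (Sm *m epsm))) P.
Proof. rewrite Id2E; mxeq. Qed.
Lemma E22 : slash k (epsm *m Um) P = slash k (Sm *m ((Um *m Um) *m (Sm *m epsm))) P.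
Proof. mxeq. Qed.
Lemma E23 : slash k (epsm *m (Um *m Um)) P = slash k (Sm *m (Um *m (Sm *m epsm))) P.
Proof. mxeq. Qed.
Lemma E31 : slash k (epsm *m Tm) P = slash k (Sm *m ((Sm *m Tw) *m (hm *m epsm))) P.
Proof. mxeq. Qed.
Lemma E32 : slash k (epsm *m (Sm *m Tw)) P = slash k (Sm *m (Tm *m (hm *m epsm))) P.
Proof. mxeq. Qed.
Lemma E33 : slash k (epsm *m (Tw *m Sm *m Tm)) P =
  slash k (Sm *m ((Sm *m Twinv *m Sm *m Tw) *m (hm *m epsm))) P.
Proof. mxeq. Qed.
Lemma E34 : slash k (epsm *m (Sm *m Twinv *m Sm *m Tw)) P =
  slash k (Sm *m ((Tw *m Sm *m Tm) *m (hm *m epsm))) P.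
Proof. mxeq. Qed.
End MX.

Lemma zperm3 (a b c : bipoly) : a + (b + (c + 0)) = 0 -> - a + (- c + (- b + 0)) = 0.
Proof. move=> H; have -> : - a + (- c + (- b + 0)) = - (a + (b + (c + 0))) by ring. by rewrite H oppr0. Qed.

Lemma zperm4 (a b c d : bipoly) : a + (b + (c + (d + 0))) = 0 -> - b + (- a + (- d + (- c + 0))) = 0.
Proof. move=> H; have -> : - b + (- a + (- d + (- c + 0))) = - (a + (b + (c + (d + 0)))) by ring. by rewrite H oppr0. Qed.

Lemma slS k Q (HS : slash k Sm Q = - Q) x M :
  slash k (Sm *m (x *m M)) Q = - slash k M (slash k x Q).
Proof. by rewrite -slash_comp HS slashN -slash_comp. Qed.

Lemma Wkk_inv k P : Wkk k P -> Wkk k (slash k epsm P).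
Proof.
move=> [[V1 H1] [[V2 H2] [V3 H3]]].
have VP : Vv k k P by apply/inV_Vv.
have VE : inV k (slash k epsm P) by apply/inV_Vv; apply: slash_Vv.
move: H1 H2 H3; rewrite /slashX !big_cons !big_nil => H1 H2 H3.
have HS : slash k Sm P = - P.
  by move: H1; rewrite slash_Id // addr0 => /addr0_eq.
split; [split=> // | split; split=> //]; rewrite /slashX !big_cons big_nil !slash_comp.
- rewrite /Id2 mulmx1 E11 -slash_comp HS slashN.
  by rewrite addr0 subrr.
- rewrite E21 E22 E23 !(slS HS); apply: zperm3.
  by have := congr1 (slash k (Sm *m epsm)) H2; rewrite !slashD slash0.
- rewrite E31 E32 E33 E34 !(slS HS); apply: zperm4.
  by have := congr1 (slash k (hm *m epsm)) H3; rewrite !slashD slash0.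
Qed.

Lemma slashX_D k gs P Q : slashX k gs (P + Q) = slashX k gs P + slashX k gs Q.
Proof. by rewrite /slashX -big_split; apply: eq_bigr => g _; rewrite slashD. Qed.

Lemma slashX_C k gs c P : slashX k gs (c%:P%:P * P) = c%:P%:P * slashX k gs P.
Proof. by rewrite /slashX mulr_sumr; apply: eq_bigr => g _; rewrite slashC. Qed.

Lemma slashX_N k gs P : slashX k gs (- P) = - slashX k gs P.
Proof. by rewrite /slashX -sumrN; apply: eq_bigr => g _; rewrite slashN. Qed.

Lemma inker_lin k gs c P Q : inker k gs P -> inker k gs Q -> 
  inker k gs (c%:P%:P * (P + Q)) /\ inker k gs (c%:P%:P * (P - Q)).
Proof.
move=> [/inV_Vv VP HP] [/inV_Vv VQ HQ]; split; split.
- by apply/inV_Vv; apply: Vv_C; apply: Vv_D.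
- by rewrite slashX_C slashX_D HP HQ addr0 mulr0.
- by apply/inV_Vv; apply: Vv_C; apply: Vv_D => //; apply: Vv_N.
- by rewrite slashX_C slashX_D slashX_N HP HQ subrr mulr0.
Qed.

Lemma Wkk_lin k c P Q : Wkk k P -> Wkk k Q ->
  Wkk k (c%:P%:P * (P + Q)) /\ Wkk k (c%:P%:P * (P - Q)).
Proof.
move=> [A1 [A2 A3]] [B1 [B2 B3]].
have [C1 D1] := inker_lin c A1 B1.
have [C2 D2] := inker_lin c A2 B2.
have [C3 D3] := inker_lin c A3 B3.
by split; split=> //; split.
Qed.

Lemma epsm_sq : epsm *m epsm = Id2.
Proof. by rewrite /epsm mx2_mul Id2E; congr mx2; ring. Qed.

Lemma slash_eps2 k P : Vv k k P -> slash k epsm (slash k epsm P) = P.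
Proof. by move=> VP; rewrite slash_comp epsm_sq slash_Id. Qed.

Theorem proposition5p14 (k : nat) (hk : odd k) :
  (forall Q : bipoly, Wkk k Q <-> exists2 P : bipoly, Wkk k P & Q = slash k epsm P) /\
  ((forall P : bipoly, Wkk k P ->
      exists P1 Pm : bipoly, [/\ Wkk_sign k 1 P1, Wkk_sign k (-1) Pm & P = P1 + Pm]) /\
   (forall P : bipoly, Wkk_sign k 1 P -> Wkk_sign k (-1) P -> P = 0)).
Proof.
split.
  move=> Q; split.
    move=> HQ; exists (slash k epsm Q); first exact: Wkk_inv.
    by rewrite slash_eps2 //; apply/inV_Vv; case: HQ => [[]].
  by move=> [P HP ->]; apply: Wkk_inv.
split.
  move=> P HP.
  have VP : Vv k k P by apply/inV_Vv; case: HP => [[]].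
  set R := slash k epsm P.
  have HR : Wkk k R by apply: Wkk_inv.
  have VR : Vv k k R by apply: slash_Vv.
  set h : algC := (2%:R)^-1.
  have [W1 W2] := Wkk_lin h HP HR.
  exists (h%:P%:P * (P + R)), (h%:P%:P * (P - R)); split.
  - split=> //; rewrite rmorph1 mul1r (negzw_sl (k := k)); last first.
      by apply: Vv_C; apply: Vv_D.
    by rewrite slashC slashD slash_eps2 // addrC.
  - split=> //; rewrite (negzw_sl (k := k)); last first.
      by apply: Vv_C; apply: Vv_D => //; apply: Vv_N.
    rewrite slashC slashB slash_eps2 // !rmorphN1 mulN1r -mulrN opprB.
    done.
  - rewrite -mulrDr addrACA subrr addr0.
    have E2 : (2%:R : algC)%:P%:P * P = P + P by rewrite !rmorph_nat mulr_natl mulr2n.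
    by rewrite -E2 mulrA -!rmorphM /= mulVf ?pnatr_eq0 // !rmorph1 mul1r.
move=> P [_ H1] [_ H2].
rewrite H1 !rmorph1 mul1r !rmorphN1 mulN1r in H2.
have : P + P = 0 by rewrite {1}H2 addNr.
rewrite -mulr2n -mulr_natl => /eqP; rewrite mulf_eq0 => /orP [|/eqP //].
by rewrite -(rmorph_nat (polyC \o polyC)) /= !polyC_eq0 pnatr_eq0.
Qed.
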